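(* Let $\gamma>0$ with $\gamma\neq1$, and let $F(\lambda)=\gamma\sin\lambda\cos(\gamma\lambda)-\sin(\gamma\lambda)\cos\lambda$ for $\lambda\in\mathbb{C}$. Then every zero $\lambda_0\neq0$ of $F$ has multiplicity one or three. A zero $\lambda_0\neq0$ has multiplicity three if and only if $\sin\lambda_0=\sin(\gamma\lambda_0)=0$, and in that case $\lambda_0$ is real. If $\gamma$ is irrational, all nonzero zeros of $F$ are simple; if $\gamma$ is rational, $F$ has infinitely many zeros of multiplicity three. *)

(* Defs.v *)
From Stdlib Require Import Reals List.
Open Scope R_scope.

Definition Cplx : Type := (R * R)%type.
Definition Re (z : Cplx) : R := fst z.
Definition Im (z : Cplx) : R := snd z.
Definition C0 : Cplx := (0, 0).
Definition RtoC (x : R) : Cplx := (x, 0).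
Definition Cadd (z w : Cplx) : Cplx := (Re z + Re w, Im z + Im w).
Definition Copp (z : Cplx) : Cplx := (- Re z, - Im z).
Definition Csub (z w : Cplx) : Cplx := Cadd z (Copp w).
Definition Cmul (z w : Cplx) : Cplx :=
  (Re z * Re w - Im z * Im w, Re z * Im w + Im z * Re w).
Definition Cnorm (z : Cplx) : R := sqrt (Re z * Re z + Im z * Im z).
Definition Cinv (z : Cplx) : Cplx :=
  (Re z / (Re z * Re z + Im z * Im z), - Im z / (Re z * Re z + Im z * Im z)).
Definition Cdiv (z w : Cplx) : Cplx := Cmul z (Cinv w).

(* Complex sine and cosine (entire extensions of the real ones):
   sin(x+iy) = sin x cosh y + i cos x sinh y,
   cos(x+iy) = cos x cosh y - i sin x sinh y. *)
Definition Csin (z : Cplx) : Cplx :=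
  (sin (Re z) * cosh (Im z), cos (Re z) * sinh (Im z)).
Definition Ccos (z : Cplx) : Cplx :=
  (cos (Re z) * cosh (Im z), - (sin (Re z) * sinh (Im z))).

Definition Fg (g : R) (l : Cplx) : Cplx :=
  Csub (Cmul (RtoC g) (Cmul (Csin l) (Ccos (Cmul (RtoC g) l))))
       (Cmul (Csin (Cmul (RtoC g) l)) (Ccos l)).

Definition C_has_deriv (f : Cplx -> Cplx) (z d : Cplx) : Prop :=
  forall eps : R, 0 < eps -> exists delta : R, 0 < delta /\
    forall h : Cplx, h <> C0 -> Cnorm h < delta ->
      Cnorm (Csub (Cdiv (Csub (f (Cadd z h)) (f z)) h) d) < eps.

Definition zero_mult (f : Cplx -> Cplx) (z0 : Cplx) (m : nat) : Prop :=
  exists D : nat -> Cplx -> Cplx,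
    (forall w, D O w = f w) /\
    (forall k w, C_has_deriv (D k) w (D (S k) w)) /\
    (forall k, (k < m)%nat -> D k z0 = C0) /\
    D m z0 <> C0.

Definition is_rational (x : R) : Prop :=
  exists p q : Z, IZR q <> 0 /\ x = IZR p / IZR q.

(* Main.v *)
Require Import Defs.
From Stdlib Require Import Reals List Lra Lia Psatz FunctionalExtensionality Classical.
Open Scope R_scope.

Lemma expm x : exp x * exp (- x) = 1.
Proof. rewrite <- exp_plus, Rplus_opp_r, exp_0; reflexivity. Qed.

Lemma cosh_plus a b : cosh (a + b) = cosh a * cosh b + sinh a * sinh b.
Proof. unfold cosh, sinh. rewrite Ropp_plus_distr, !exp_plus. field. Qed.
Lemma sinh_plus a b : sinh (a + b) = sinh a * cosh b + cosh a * sinh b.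
Proof. unfold cosh, sinh. rewrite Ropp_plus_distr, !exp_plus. field. Qed.
Lemma cosh_minus a b : cosh (a - b) = cosh a * cosh b - sinh a * sinh b.
Proof. unfold Rminus, cosh, sinh. rewrite Ropp_plus_distr, !exp_plus, Ropp_involutive. field. Qed.
Lemma sinh_minus a b : sinh (a - b) = sinh a * cosh b - cosh a * sinh b.
Proof. unfold Rminus, cosh, sinh. rewrite Ropp_plus_distr, !exp_plus, Ropp_involutive. field. Qed.
Lemma cosh_sinh a : cosh a * cosh a - sinh a * sinh a = 1.
Proof. unfold cosh, sinh. rewrite <- (expm a). field. Qed.
Lemma cosh_ge1 a : 1 <= cosh a.
Proof. unfold cosh. pose proof (expm a). pose proof (exp_pos a). pose proof (exp_pos (-a)).
  assert (0 <= (exp a - exp (-a))*(exp a - exp (-a))) by apply Rle_0_sqr.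
  assert (4 <= (exp a + exp (-a))*(exp a + exp (-a))) by nra. nra. Qed.
Lemma sinh_eq0 a : sinh a = 0 -> a = 0.
Proof. unfold sinh. intro H. assert (exp a = exp (-a)) by lra.
  apply exp_inv in H0. lra. Qed.

Lemma exp_bnd b : Rabs b <= 1/2 -> 0 <= exp b - 1 - b <= 2 * (b*b).
Proof. intro Hb. pose proof (exp_ineq1_le b). pose proof (exp_ineq1_le (-b)).
  pose proof (expm b). pose proof (exp_pos b).
  assert (-1/2 <= b <= 1/2) by (apply Rabs_le_between in Hb ||
    (unfold Rabs in Hb; destruct (Rcase_abs b); lra)).
  split. lra. nra. Qed.

Lemma sin_abs_le t : Rabs (sin t) <= Rabs t.
Proof.
  assert (H : forall t, 0 <= t -> Rabs (sin t) <= t).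
  { intros u Hu. destruct (Req_dec u 0) as [->|Hn]. rewrite sin_0, Rabs_R0; lra.
    pose proof (sin_lt_x u ltac:(lra)). pose proof (SIN_bound u). pose proof PI2_1.
    apply Rabs_le. split; [|lra].
    destruct (Rle_dec 1 u). lra.
    assert (0 <= sin u) by (apply sin_ge_0; lra). lra. }
  destruct (Rle_dec 0 t).
  - rewrite (Rabs_right t) by lra. auto.
  - rewrite <- (Ropp_involutive t), sin_neg, Rabs_Ropp, Rabs_Ropp.
    rewrite (Rabs_right (-t)) by lra. apply H; lra.
Qed.

Lemma cos_bnd a : 0 <= 1 - cos a <= a * a / 2.
Proof.
  pose proof (COS_bound a). split. lra.
  replace a with (2 * (a/2)) at 1 by field. rewrite cos_2a_sin.
  pose proof (Rsqr_le_abs_1 _ _ (sin_abs_le (a/2))). unfold Rsqr in H0. lra.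
Qed.

Lemma sin_bnd_pos a : 0 < a -> a <= 1/2 -> Rabs (sin a - a) <= a * a.
Proof.
  intros H1 H2.
  destruct (MVT_cor2 (fun t => sin t - t) (fun t => cos t - 1) 0 a H1) as [c [Hc1 Hc2]].
  { intros c _. apply derivable_pt_lim_minus. apply derivable_pt_lim_sin. apply derivable_pt_lim_id. }
  simpl in Hc1. rewrite sin_0 in Hc1. replace (sin a - a) with ((cos c - 1) * (a - 0)) by lra.
  pose proof (cos_bnd c). rewrite Rabs_mult. rewrite (Rabs_left1 (cos c - 1)) by lra.
  rewrite (Rabs_right (a - 0)) by lra. nra.
Qed.

Lemma sin_bnd a : Rabs a <= 1/2 -> Rabs (sin a - a) <= a * a.
Proof.
  intro H. destruct (Rtotal_order a 0) as [Hl|[He|Hg]].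
  - rewrite Rabs_left in H by lra.
    replace (sin a - a) with (- (sin (-a) - (-a))) by (rewrite sin_neg; ring).
    rewrite Rabs_Ropp. replace (a*a) with ((-a)*(-a)) by ring. apply sin_bnd_pos; lra.
  - subst. rewrite sin_0. rewrite Rminus_0_r, Rabs_R0. lra.
  - rewrite Rabs_right in H by lra. apply sin_bnd_pos; lra.
Qed.

Lemma abs_small a b : a*a + b*b < 1/4 -> Rabs a <= 1/2.
Proof. intro H. apply Rabs_le. nra. Qed.

Lemma ebounds a b : a*a + b*b < 1/4 ->
  Rabs (cos a * cosh b - 1) <= 2 * (a*a+b*b) /\
  Rabs (sin a * sinh b) <= 2 * (a*a+b*b) /\
  Rabs (sin a * cosh b - a) <= 2 * (a*a+b*b) /\
  Rabs (cos a * sinh b - b) <= 2 * (a*a+b*b).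
Proof.
  intro H. pose proof (abs_small a b H) as Ha.
  assert (Hb : Rabs b <= 1/2) by (apply (abs_small b a); lra).
  pose proof (exp_bnd b Hb) as E1.
  assert (Hb' : Rabs (-b) <= 1/2) by (rewrite Rabs_Ropp; auto).
  pose proof (exp_bnd (-b) Hb') as E2.
  assert (Ch : 0 <= cosh b - 1 <= 2*(b*b)) by (unfold cosh; nra).
  assert (Sh : Rabs (sinh b - b) <= b*b) by (unfold sinh; apply Rabs_le; nra).
  pose proof (cos_bnd a) as Ca. pose proof (sin_bnd a Ha) as Sa. pose proof (sin_abs_le a) as Sa'.
  assert (A2 : Rabs a * Rabs a = a * a) by (rewrite <- Rabs_mult; apply Rabs_right; nra).
  assert (B2 : Rabs b * Rabs b = b * b) by (rewrite <- Rabs_mult; apply Rabs_right; nra).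
  pose proof (Rabs_pos a). pose proof (Rabs_pos b).
  assert (Shb : Rabs (sinh b) <= Rabs b + b*b).
  { replace (sinh b) with (b + (sinh b - b)) by ring.
    eapply Rle_trans. apply Rabs_triang. lra. }
  pose proof (Rabs_pos (sinh b)). pose proof (Rabs_pos (sin a)).
  split; [|split; [|split]].
  - apply Rabs_le. nra.
  - rewrite Rabs_mult.
    apply Rle_trans with (Rabs a * (Rabs b + b*b)).
    apply Rmult_le_compat; auto. rewrite <- A2, <- B2.
    assert (0 <= (Rabs a - Rabs b)*(Rabs a - Rabs b)) by apply Rle_0_sqr. nra.
  - replace (sin a * cosh b - a) with ((sin a - a) + sin a * (cosh b - 1)) by ring.
    eapply Rle_trans. apply Rabs_triang. rewrite Rabs_mult.
    rewrite (Rabs_right (cosh b - 1)) by lra.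
    assert (Rabs (sin a) * (cosh b - 1) <= Rabs a * (2 * (b*b))) by (apply Rmult_le_compat; lra).
    nra.
  - replace (cos a * sinh b - b) with ((sinh b - b) - (1 - cos a) * sinh b) by ring.
    eapply Rle_trans. apply Rabs_triang. rewrite Rabs_Ropp, Rabs_mult.
    rewrite (Rabs_right (1 - cos a)) by lra.
    assert ((1 - cos a) * Rabs (sinh b) <= (a*a/2) * (Rabs b + b*b)) by (apply Rmult_le_compat; lra).
    nra.
Qed.

Definition Rem (f : Cplx -> Cplx) (z d : Cplx) (a b : R) : Cplx :=
  Csub (Csub (f (Cadd z (a,b))) (f z)) (Cmul d (a,b)).

Definition qb (f : Cplx -> Cplx) (z d : Cplx) : Prop :=
  exists K r, 0 <= K /\ 0 < r /\ forall a b, a*a+b*b < r ->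
    Rabs (Re (Rem f z d a b)) <= K*(a*a+b*b) /\ Rabs (Im (Rem f z d a b)) <= K*(a*a+b*b).

Lemma sqrt_lt_eps x e : 0 <= x -> 0 < e -> x < e * e -> sqrt x < e.
Proof. intros. rewrite <- (sqrt_square e) by lra. apply sqrt_lt_1_alt. lra. Qed.

Lemma sq_le x y : Rabs x <= y -> x * x <= y * y.
Proof. intro H. unfold Rabs in H; destruct (Rcase_abs x); nra. Qed.

Lemma qb_deriv f z d : qb f z d -> C_has_deriv f z d.
Proof.
  intros [K [r [HK [Hr H]]]] eps Heps.
  exists (Rmin (sqrt r) (eps / (2*(K+1)))). split.
  { apply Rmin_pos. apply sqrt_lt_R0; auto. apply Rdiv_lt_0_compat; lra. }
  intros [a b] Hh Hn.
  assert (Hs : 0 < a*a + b*b).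
  { destruct (Req_dec a 0); destruct (Req_dec b 0); try nra. subst. exfalso; apply Hh; reflexivity. }
  unfold Cnorm in Hn; simpl in Hn.
  set (s := a*a+b*b) in *.
  assert (Hs1 : sqrt s * sqrt s = s) by (apply sqrt_sqrt; lra).
  pose proof (sqrt_pos s).
  pose proof (Rmin_l (sqrt r) (eps / (2*(K+1)))). pose proof (Rmin_r (sqrt r) (eps / (2*(K+1)))).
  assert (Hsr : s < r).
  { assert (sqrt s < sqrt r) by lra. apply sqrt_lt_0_alt in H3. auto. }
  assert (Hse : sqrt s * (2*(K+1)) < eps).
  { assert (sqrt s < eps / (2*(K+1))) by lra.
    apply (Rmult_lt_compat_r (2*(K+1))) in H3; [|lra].
    replace (eps / (2 * (K + 1)) * (2 * (K + 1))) with eps in H3 by (field; lra). lra. }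
  destruct (H a b Hsr) as [G1 G2]. unfold Rem in G1, G2. fold s in G1, G2.
  destruct (f (Cadd z (a,b))) as [p1 p2]. destruct (f z) as [q1 q2]. destruct d as [d1 d2].
  unfold Cnorm, Csub, Cdiv, Cadd, Copp, Cmul, Cinv, Re, Im in *; simpl in *.
  set (R1 := p1 + - q1 + - (d1 * a - d2 * b)) in *.
  set (R2 := p2 + - q2 + - (d1 * b + d2 * a)) in *.
  match goal with |- sqrt ?X < _ => replace X with ((R1*R1 + R2*R2)/s) end.
  2:{ unfold R1, R2, s. field. fold s. lra. }
  apply sqrt_lt_eps; [unfold Rdiv; apply Rmult_le_pos; [nra | left; apply Rinv_0_lt_compat; lra] | lra |].
  apply sq_le in G1. apply sq_le in G2.
  apply Rmult_lt_reg_r with s; [lra|].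
  unfold Rdiv. rewrite Rmult_assoc, Rinv_l, Rmult_1_r by lra.
  assert (E4 : 4*((K+1)*(K+1))*s < eps * eps).
  { replace (4*((K+1)*(K+1))*s) with ((sqrt s * (2*(K+1))) * (sqrt s * (2*(K+1)))) by (transitivity (4*((K+1)*(K+1))*(sqrt s * sqrt s)); [ring | rewrite Hs1; ring]).
    assert (0 <= sqrt s * (2*(K+1))) by nra. nra. }
  assert (E5 : 4*((K+1)*(K+1))*s*s < eps * eps * s) by nra.
  assert (E6 : 2*(K*K)*s*s <= 4*((K+1)*(K+1))*s*s) by nra.
  nra.
Qed.

Lemma abs_lin4 x1 x2 x3 x4 e1 e2 e3 e4 B :
  Rabs e1 <= B -> Rabs e2 <= B -> Rabs e3 <= B -> Rabs e4 <= B ->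
  Rabs (x1*e1 + x2*e2 + x3*e3 + x4*e4) <= (Rabs x1 + Rabs x2 + Rabs x3 + Rabs x4) * B.
Proof.
  intros H1 H2 H3 H4.
  assert (forall x e, Rabs e <= B -> Rabs (x*e) <= Rabs x * B).
  { intros x e He. rewrite Rabs_mult. apply Rmult_le_compat_l; auto. apply Rabs_pos. }
  pose proof (H x1 e1 H1). pose proof (H x2 e2 H2). pose proof (H x3 e3 H3). pose proof (H x4 e4 H4).
  pose proof (Rabs_triang (x1*e1 + x2*e2 + x3*e3) (x4*e4)).
  pose proof (Rabs_triang (x1*e1 + x2*e2) (x3*e3)).
  pose proof (Rabs_triang (x1*e1) (x2*e2)). lra.
Qed.

Lemma qb_sin w : qb Csin w (Ccos w).
Proof.
  destruct w as [u v].
  set (M := Rabs (sin u * cosh v) + Rabs (cos u * sinh v) + Rabs (cos u * cosh v) + Rabs (sin u * sinh v)).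
  exists (2*M), (1/4). split. unfold M; pose proof (Rabs_pos (sin u * cosh v)); pose proof (Rabs_pos (cos u * sinh v));
   pose proof (Rabs_pos (cos u * cosh v)); pose proof (Rabs_pos (sin u * sinh v)); lra.
  split. lra. intros a b Hab.
  destruct (ebounds a b Hab) as [B1 [B2 [B3 B4]]].
  assert (B2' : Rabs (- (sin a * sinh b)) <= 2*(a*a+b*b)) by (rewrite Rabs_Ropp; auto).
  unfold Rem, Csin, Ccos, Csub, Cadd, Copp, Cmul, Re, Im; simpl.
  rewrite sin_plus, cos_plus, cosh_plus, sinh_plus.
  split.
  - match goal with |- Rabs ?X <= _ => replace X with
      ((sin u * cosh v) * (cos a * cosh b - 1) + (- (cos u * sinh v)) * (- (sin a * sinh b))
       + (cos u * cosh v) * (sin a * cosh b - a) + (sin u * sinh v) * (cos a * sinh b - b)) by ring end.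
    replace (2*M*(a*a+b*b)) with (M * (2*(a*a+b*b))) by ring. unfold M.
    rewrite <- (Rabs_Ropp (cos u * sinh v)). apply abs_lin4; auto.
  - match goal with |- Rabs ?X <= _ => replace X with
      ((sin u * cosh v) * (- (sin a * sinh b)) + (cos u * sinh v) * (cos a * cosh b - 1)
       + (cos u * cosh v) * (cos a * sinh b - b) + (- (sin u * sinh v)) * (sin a * cosh b - a)) by ring end.
    replace (2*M*(a*a+b*b)) with (M * (2*(a*a+b*b))) by ring. unfold M.
    rewrite <- (Rabs_Ropp (sin u * sinh v)). apply abs_lin4; auto.
Qed.

Lemma qb_cos w : qb Ccos w (Copp (Csin w)).
Proof.
  destruct w as [u v].
  set (M := Rabs (cos u * cosh v) + Rabs (sin u * sinh v) + Rabs (sin u * cosh v) + Rabs (cos u * sinh v)).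
  exists (2*M), (1/4). split. unfold M; pose proof (Rabs_pos (sin u * cosh v)); pose proof (Rabs_pos (cos u * sinh v));
   pose proof (Rabs_pos (cos u * cosh v)); pose proof (Rabs_pos (sin u * sinh v)); lra.
  split. lra. intros a b Hab.
  destruct (ebounds a b Hab) as [B1 [B2 [B3 B4]]].
  assert (B2' : Rabs (- (sin a * sinh b)) <= 2*(a*a+b*b)) by (rewrite Rabs_Ropp; auto).
  unfold Rem, Csin, Ccos, Csub, Cadd, Copp, Cmul, Re, Im; simpl.
  rewrite sin_plus, cos_plus, cosh_plus, sinh_plus.
  split.
  - match goal with |- Rabs ?X <= _ => replace X with
      ((cos u * cosh v) * (cos a * cosh b - 1) + (sin u * sinh v) * (- (sin a * sinh b))
       + (- (sin u * cosh v)) * (sin a * cosh b - a) + (cos u * sinh v) * (cos a * sinh b - b)) by ring end.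
    replace (2*M*(a*a+b*b)) with (M * (2*(a*a+b*b))) by ring. unfold M.
    rewrite <- (Rabs_Ropp (sin u * cosh v)). apply abs_lin4; auto.
  - match goal with |- Rabs ?X <= _ => replace X with
      ((cos u * cosh v) * (- (sin a * sinh b)) + (- (sin u * sinh v)) * (cos a * cosh b - 1)
       + (- (sin u * cosh v)) * (cos a * sinh b - b) + (- (cos u * sinh v)) * (sin a * cosh b - a)) by ring end.
    replace (2*M*(a*a+b*b)) with (M * (2*(a*a+b*b))) by ring. unfold M.
    rewrite <- (Rabs_Ropp (sin u * sinh v)), <- (Rabs_Ropp (sin u * cosh v)), <- (Rabs_Ropp (cos u * sinh v)).
    apply abs_lin4; auto.
Qed.

Lemma qb_ext f f' z d : (forall w, f w = f' w) -> qb f z d -> qb f' z d.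
Proof. intros H. replace f' with f by (apply functional_extensionality; auto). auto. Qed.

Lemma qb_scal p f z d : qb f z d ->
  qb (fun w => Cmul (RtoC p) (f w)) z (Cmul (RtoC p) d).
Proof.
  intros [K [r [HK [Hr H]]]]. exists (Rabs p * K), r. split.
  apply Rmult_le_pos; auto; apply Rabs_pos. split; auto.
  intros a b Hab. destruct (H a b Hab) as [H1 H2].
  unfold Rem in *. destruct (f (Cadd z (a,b))) as [p1 p2]. destruct (f z) as [q1 q2]. destruct d as [d1 d2].
  unfold Csub, Cadd, Copp, Cmul, RtoC, Re, Im in *; simpl in *.
  split.
  - replace (p * p1 - 0 * p2 + - (p * q1 - 0 * q2) + - ((p * d1 - 0 * d2) * a - (p * d2 + 0 * d1) * b))
      with (p * (p1 + - q1 + - (d1 * a - d2 * b))) by ring.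
    rewrite Rabs_mult, Rmult_assoc. apply Rmult_le_compat_l; auto. apply Rabs_pos.
  - replace (p * p2 + 0 * p1 + - (p * q2 + 0 * q1) + - ((p * d1 - 0 * d2) * b + (p * d2 + 0 * d1) * a))
      with (p * (p2 + - q2 + - (d1 * b + d2 * a))) by ring.
    rewrite Rabs_mult, Rmult_assoc. apply Rmult_le_compat_l; auto. apply Rabs_pos.
Qed.

Lemma qb_add f1 f2 z d1 d2 : qb f1 z d1 -> qb f2 z d2 ->
  qb (fun w => Cadd (f1 w) (f2 w)) z (Cadd d1 d2).
Proof.
  intros [K1 [r1 [HK1 [Hr1 H1]]]] [K2 [r2 [HK2 [Hr2 H2]]]].
  exists (K1 + K2), (Rmin r1 r2). split. lra. split. apply Rmin_pos; auto.
  intros a b Hab. pose proof (Rmin_l r1 r2). pose proof (Rmin_r r1 r2).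
  destruct (H1 a b ltac:(lra)) as [A1 A2]. destruct (H2 a b ltac:(lra)) as [B1 B2].
  unfold Rem in *. destruct (f1 (Cadd z (a,b))) as [p1 p2]. destruct (f1 z) as [q1 q2].
  destruct (f2 (Cadd z (a,b))) as [s1 s2]. destruct (f2 z) as [t1 t2].
  destruct d1 as [x1 x2]. destruct d2 as [y1 y2].
  unfold Csub, Cadd, Copp, Cmul, RtoC, Re, Im in *; simpl in *.
  split.
  - match goal with |- Rabs ?X <= _ => replace X with
     ((p1 + - q1 + - (x1 * a - x2 * b)) + (s1 + - t1 + - (y1 * a - y2 * b))) by ring end.
    eapply Rle_trans. apply Rabs_triang. lra.
  - match goal with |- Rabs ?X <= _ => replace X with
     ((p2 + - q2 + - (x1 * b + x2 * a)) + (s2 + - t2 + - (y1 * b + y2 * a))) by ring end.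
    eapply Rle_trans. apply Rabs_triang. lra.
Qed.

Lemma qb_comp c f z d : qb f (Cmul (RtoC c) z) d ->
  qb (fun w => f (Cmul (RtoC c) w)) z (Cmul (RtoC c) d).
Proof.
  intros [K [r [HK [Hr H]]]]. exists (K * (c*c)), (r / (c*c+1)).
  split. apply Rmult_le_pos; nra. split. apply Rdiv_lt_0_compat; nra.
  intros a b Hab.
  assert (Hr' : (c*a)*(c*a) + (c*b)*(c*b) < r).
  { apply (Rmult_lt_compat_r (c*c+1)) in Hab; [|nra].
    replace (r / (c * c + 1) * (c * c + 1)) with r in Hab by (field; nra). nra. }
  destruct (H (c*a) (c*b) Hr') as [H1 H2].
  replace ((c*a)*(c*a) + (c*b)*(c*b)) with ((c*c)*(a*a+b*b)) in H1, H2 by ring.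
  rewrite <- Rmult_assoc in H1, H2.
  unfold Rem in *.
  replace (Cadd (Cmul (RtoC c) z) (c * a, c * b)) with (Cmul (RtoC c) (Cadd z (a,b))) in H1, H2
   by (destruct z; unfold Cadd, Cmul, RtoC, Re, Im; simpl; f_equal; ring).
  destruct (f (Cmul (RtoC c) (Cadd z (a,b)))) as [p1 p2]. destruct (f (Cmul (RtoC c) z)) as [q1 q2].
  destruct d as [d1 d2].
  unfold Csub, Cadd, Copp, Cmul, RtoC, Re, Im in *; simpl in *.
  split.
  - match goal with |- Rabs ?X <= _ => replace X with (p1 + - q1 + - (d1 * (c * a) - d2 * (c * b))) by ring end. auto.
  - match goal with |- Rabs ?X <= _ => replace X with (p2 + - q2 + - (d1 * (c * b) + d2 * (c * a))) by ring end. auto.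
Qed.

Definition Gf (p q c : R) (z : Cplx) : Cplx :=
  Cadd (Cmul (RtoC p) (Csin (Cmul (RtoC c) z))) (Cmul (RtoC q) (Ccos (Cmul (RtoC c) z))).

Lemma qb_G p q c z : qb (Gf p q c) z (Gf (-(c*q)) (c*p) c z).
Proof.
  pose proof (qb_add _ _ z _ _ (qb_scal p _ z _ (qb_comp c Csin z _ (qb_sin (Cmul (RtoC c) z))))
                                (qb_scal q _ z _ (qb_comp c Ccos z _ (qb_cos (Cmul (RtoC c) z))))) as H.
  match type of H with qb _ _ ?d => replace (Gf (-(c*q)) (c*p) c z) with d end.
  exact H.
  destruct z as [x y]. unfold Gf, Cadd, Cmul, Copp, RtoC, Csin, Ccos, Re, Im; simpl. f_equal; ring.
Qed.

Fixpoint PQ (c p0 : R) (k : nat) : R * R :=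
  match k with
  | O => (p0, 0)
  | S k => (- (c * snd (PQ c p0 k)), c * fst (PQ c p0 k))
  end.

Definition Dk (g : R) (k : nat) (z : Cplx) : Cplx :=
  Cadd (Gf (fst (PQ (1+g) ((g-1)/2) k)) (snd (PQ (1+g) ((g-1)/2) k)) (1+g) z)
       (Gf (fst (PQ (1-g) ((g+1)/2) k)) (snd (PQ (1-g) ((g+1)/2) k)) (1-g) z).

Lemma Dk_deriv g k z : C_has_deriv (Dk g k) z (Dk g (S k) z).
Proof. apply qb_deriv. unfold Dk. apply qb_add; apply qb_G. Qed.

Lemma CmulR c x y : Cmul (RtoC c) (x, y) = (c * x, c * y).
Proof. unfold Cmul, RtoC, Re, Im; simpl. f_equal; ring. Qed.

Section T.
Variable g : R.
Lemma s1 t : sin ((1+g)*t) = sin t * cos (g*t) + cos t * sin (g*t).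
Proof. replace ((1+g)*t) with (t + g*t) by ring. apply sin_plus. Qed.
Lemma c1 t : cos ((1+g)*t) = cos t * cos (g*t) - sin t * sin (g*t).
Proof. replace ((1+g)*t) with (t + g*t) by ring. apply cos_plus. Qed.
Lemma sh1 t : sinh ((1+g)*t) = sinh t * cosh (g*t) + cosh t * sinh (g*t).
Proof. replace ((1+g)*t) with (t + g*t) by ring. apply sinh_plus. Qed.
Lemma ch1 t : cosh ((1+g)*t) = cosh t * cosh (g*t) + sinh t * sinh (g*t).
Proof. replace ((1+g)*t) with (t + g*t) by ring. apply cosh_plus. Qed.
Lemma s2 t : sin ((1-g)*t) = sin t * cos (g*t) - cos t * sin (g*t).
Proof. replace ((1-g)*t) with (t - g*t) by ring. apply sin_minus. Qed.
Lemma c2 t : cos ((1-g)*t) = cos t * cos (g*t) + sin t * sin (g*t).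
Proof. replace ((1-g)*t) with (t - g*t) by ring. apply cos_minus. Qed.
Lemma sh2 t : sinh ((1-g)*t) = sinh t * cosh (g*t) - cosh t * sinh (g*t).
Proof. replace ((1-g)*t) with (t - g*t) by ring. apply sinh_minus. Qed.
Lemma ch2 t : cosh ((1-g)*t) = cosh t * cosh (g*t) - sinh t * sinh (g*t).
Proof. replace ((1-g)*t) with (t - g*t) by ring. apply cosh_minus. Qed.
End T.

Ltac expand := unfold Dk, Gf, Fg; simpl PQ; rewrite ?CmulR;
  unfold Csub, Cadd, Cmul, Copp, RtoC, Csin, Ccos, Re, Im; simpl;
  rewrite ?s1, ?c1, ?sh1, ?ch1, ?s2, ?c2, ?sh2, ?ch2; f_equal; field.

Lemma E0 g x y : Dk g 0 (x,y) = Fg g (x,y).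
Proof. expand. Qed.
Lemma E1 g x y : Dk g 1 (x,y) = Cmul (RtoC (1 - g*g)) (Cmul (Csin (x,y)) (Csin (Cmul (RtoC g) (x,y)))).
Proof. expand. Qed.
Lemma E2 g x y : Dk g 2 (x,y) = Cmul (RtoC (1 - g*g))
  (Cadd (Cmul (Ccos (x,y)) (Csin (Cmul (RtoC g) (x,y)))) (Cmul (RtoC g) (Cmul (Csin (x,y)) (Ccos (Cmul (RtoC g) (x,y)))))).
Proof. expand. Qed.
Lemma E3 g x y : Dk g 3 (x,y) = Cmul (RtoC (1 - g*g))
  (Csub (Cmul (RtoC (2*g)) (Cmul (Ccos (x,y)) (Ccos (Cmul (RtoC g) (x,y)))))
        (Cmul (RtoC (1 + g*g)) (Cmul (Csin (x,y)) (Csin (Cmul (RtoC g) (x,y)))))).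
Proof. expand. Qed.

Lemma norm_comp X e : Cnorm X < e -> Rabs (Re X) < e /\ Rabs (Im X) < e.
Proof.
  destruct X as [a b]. unfold Cnorm, Re, Im; simpl. intro H. split.
  - rewrite <- sqrt_Rsqr_abs. eapply Rle_lt_trans; [|exact H]. apply sqrt_le_1_alt. unfold Rsqr. nra.
  - rewrite <- sqrt_Rsqr_abs. eapply Rle_lt_trans; [|exact H]. apply sqrt_le_1_alt. unfold Rsqr. nra.
Qed.

Lemma small_zero t : (forall e, 0 < e -> Rabs t < 2 * e) -> t = 0.
Proof.
  intro H. destruct (Req_dec t 0); auto. exfalso.
  pose proof (Rabs_pos_lt t H0). specialize (H (Rabs t / 2) ltac:(lra)). lra.
Qed.

Lemma deriv_unique f z d1 d2 : C_has_deriv f z d1 -> C_has_deriv f z d2 -> d1 = d2.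
Proof.
  intros H1 H2.
  assert (K : forall e, 0 < e -> Rabs (Re d1 - Re d2) < 2*e /\ Rabs (Im d1 - Im d2) < 2*e).
  { intros e He. destruct (H1 e He) as [x1 [Hx1 G1]]. destruct (H2 e He) as [x2 [Hx2 G2]].
    set (dl := Rmin x1 x2 / 2).
    assert (Hdl : 0 < dl) by (unfold dl; pose proof (Rmin_pos x1 x2 Hx1 Hx2); lra).
    assert (Hh : (dl, 0) <> C0) by (unfold C0; intro E; injection E; lra).
    assert (Hn : Cnorm (dl, 0) = dl).
    { unfold Cnorm, Re, Im; simpl. replace (dl*dl+0*0) with (Rsqr dl) by (unfold Rsqr; ring).
      rewrite sqrt_Rsqr; lra. }
    pose proof (Rmin_l x1 x2). pose proof (Rmin_r x1 x2).
    assert (dl < x1 /\ dl < x2) by (unfold dl; lra).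
    specialize (G1 (dl,0) Hh ltac:(lra)). specialize (G2 (dl,0) Hh ltac:(lra)).
    apply norm_comp in G1. apply norm_comp in G2.
    set (Q := Cdiv (Csub (f (Cadd z (dl, 0))) (f z)) (dl, 0)) in *.
    destruct Q as [q1 q2]. destruct d1 as [a1 a2]. destruct d2 as [b1 b2].
    unfold Csub, Cadd, Copp, Re, Im in *; simpl in *.
    split.
    - replace (a1 - b1) with ((q1 + - b1) - (q1 + - a1)) by ring.
      pose proof (Rabs_triang (q1 + - b1) (- (q1 + - a1))) as TT. rewrite Rabs_Ropp in TT.
      unfold Rminus. lra.
    - replace (a2 - b2) with ((q2 + - b2) - (q2 + - a2)) by ring.
      pose proof (Rabs_triang (q2 + - b2) (- (q2 + - a2))) as TT. rewrite Rabs_Ropp in TT.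
      unfold Rminus. lra. }
  destruct d1 as [a1 a2]. destruct d2 as [b1 b2]. unfold Re, Im in K; simpl in K.
  assert (a1 - b1 = 0) by (apply small_zero; intros; apply K; auto).
  assert (a2 - b2 = 0) by (apply small_zero; intros; apply K; auto).
  f_equal; lra.
Qed.

Lemma D0_eq g w : Dk g 0 w = Fg g w.
Proof. destruct w; apply E0. Qed.

Lemma zm_iff g z m : zero_mult (Fg g) z m <->
  ((forall k, (k < m)%nat -> Dk g k z = C0) /\ Dk g m z <> C0).
Proof.
  split.
  - intros [D [HD0 [HD1 [HD2 HD3]]]].
    assert (Eq : forall k w, D k w = Dk g k w).
    { induction k. intro w. rewrite HD0, D0_eq. auto.
      intro w. apply (deriv_unique (Dk g k) w).
      replace (Dk g k) with (D k) by (apply functional_extensionality; auto). apply HD1.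
      apply Dk_deriv. }
    split. intros k Hk. rewrite <- Eq. auto. rewrite <- Eq. auto.
  - intros [H1 H2]. exists (Dk g). split. apply D0_eq. split. apply Dk_deriv. split; auto.
Qed.

Lemma Cmul_eq0 a b : Cmul a b = C0 -> a = C0 \/ b = C0.
Proof.
  destruct a as [a1 a2]. destruct b as [b1 b2]. unfold Cmul, C0, Re, Im; simpl.
  intro H. injection H as H1 H2.
  destruct (Req_dec (a1*a1+a2*a2) 0).
  - left. assert (a1 = 0) by nra. assert (a2 = 0) by nra. subst; auto.
  - right. assert (H3 : (a1*a1+a2*a2) * b1 = 0).
    { replace ((a1*a1+a2*a2) * b1) with (a1*(a1*b1-a2*b2) + a2*(a1*b2+a2*b1)) by ring. rewrite H1, H2; ring. }
    assert (H4 : (a1*a1+a2*a2) * b2 = 0).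
    { replace ((a1*a1+a2*a2) * b2) with (a1*(a1*b2+a2*b1) - a2*(a1*b1-a2*b2)) by ring. rewrite H1, H2; ring. }
    apply Rmult_integral in H3. apply Rmult_integral in H4.
    destruct H3; destruct H4; try contradiction. subst; auto.
Qed.

Lemma Cmul_ne0 a b : a <> C0 -> b <> C0 -> Cmul a b <> C0.
Proof. intros Ha Hb H. destruct (Cmul_eq0 a b H); auto. Qed.

Lemma RtoC_ne0 r : r <> 0 -> RtoC r <> C0.
Proof. intros H E. unfold RtoC, C0 in E. injection E. auto. Qed.

Lemma sin_zero x y : Csin (x,y) = C0 -> y = 0 /\ sin x = 0.
Proof.
  unfold Csin, C0, Re, Im; simpl. intro H. injection H as H1 H2.
  pose proof (cosh_ge1 y).
  assert (sin x = 0) by (apply Rmult_integral in H1; destruct H1; auto; lra).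
  pose proof (sin2_cos2 x). unfold Rsqr in H3. rewrite H0 in H3.
  assert (cos x <> 0) by (intro E; rewrite E in H3; lra).
  apply Rmult_integral in H2. destruct H2; [contradiction|]. split; auto. apply sinh_eq0; auto.
Qed.

Lemma cos_ne0 w : Csin w = C0 -> Ccos w <> C0.
Proof.
  destruct w as [x y]. intro H. destruct (sin_zero x y H) as [-> Hs].
  unfold Ccos, C0, Re, Im; simpl. intro E. injection E as E1 E2.
  rewrite cosh_0 in E1. pose proof (sin2_cos2 x). unfold Rsqr in H0. rewrite Hs in H0. nra.
Qed.

Lemma Fg_expand g z : Fg g z = Csub (Cmul (RtoC g) (Cmul (Csin z) (Ccos (Cmul (RtoC g) z))))
       (Cmul (Csin (Cmul (RtoC g) z)) (Ccos z)).
Proof. reflexivity. Qed.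

Lemma both g z : g <> 0 -> Fg g z = C0 ->
  (Csin z = C0 <-> Csin (Cmul (RtoC g) z) = C0).
Proof.
  intros Hg HF. rewrite Fg_expand in HF.
  pose proof (cos_ne0 z) as Cz. pose proof (cos_ne0 (Cmul (RtoC g) z)) as Cgz.
  split; intro H.
  - rewrite H in HF. specialize (Cz H).
    destruct (Cmul_eq0 (Csin (Cmul (RtoC g) z)) (Ccos z)) as [E|E]; auto; [|contradiction].
    revert HF. generalize (Csin (Cmul (RtoC g) z)) (Ccos z) (Ccos (Cmul (RtoC g) z)).
    intros [a1 a2] [b1 b2] [c1 c2]. unfold Csub, Cadd, Copp, Cmul, RtoC, C0, Re, Im; simpl.
    intro E. injection E as E1 E2. f_equal; lra.
  - rewrite H in HF. specialize (Cgz H).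
    assert (Cmul (RtoC g) (Cmul (Csin z) (Ccos (Cmul (RtoC g) z))) = C0).
    { revert HF. generalize (Cmul (RtoC g) (Cmul (Csin z) (Ccos (Cmul (RtoC g) z)))) (Ccos z).
      intros [a1 a2] [b1 b2]. unfold Csub, Cadd, Copp, Cmul, RtoC, C0, Re, Im; simpl.
      intro E. injection E as E1 E2. f_equal; lra. }
    destruct (Cmul_eq0 _ _ H0) as [E|E]. exfalso; exact (RtoC_ne0 g Hg E).
    destruct (Cmul_eq0 _ _ E); auto. contradiction.
Qed.

Lemma g2 g : 0 < g -> g <> 1 -> 1 - g*g <> 0.
Proof. intros H1 H2 E. apply H2. assert ((g-1)*(g+1) = 0) by nra.
  apply Rmult_integral in H. destruct H; lra. Qed.

Lemma mult3_of g x y : 0 < g -> g <> 1 -> Csin (x,y) = C0 -> Csin (Cmul (RtoC g) (x,y)) = C0 ->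
  zero_mult (Fg g) (x,y) 3.
Proof.
  intros H1 H2 S1 S2. pose proof (g2 g H1 H2).
  pose proof (cos_ne0 _ S1) as C1. pose proof (cos_ne0 _ S2) as C2.
  apply zm_iff. split.
  - intros k Hk. destruct k as [|[|[|k]]]; try lia.
    + rewrite D0_eq, Fg_expand, S1, S2. generalize (Ccos (Cmul (RtoC g) (x, y))) (Ccos (x,y)).
      intros [a1 a2] [b1 b2]. unfold Csub, Cadd, Copp, Cmul, RtoC, C0, Re, Im; simpl. f_equal; ring.
    + rewrite E1, S1, S2. unfold Csub, Cadd, Copp, Cmul, RtoC, C0, Re, Im; simpl. f_equal; ring.
    + rewrite E2, S1, S2. generalize (Ccos (Cmul (RtoC g) (x, y))) (Ccos (x,y)).
      intros [a1 a2] [b1 b2]. unfold Csub, Cadd, Copp, Cmul, RtoC, C0, Re, Im; simpl. f_equal; ring.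
  - rewrite E3, S1, S2.
    replace (Csub (Cmul (RtoC (2 * g)) (Cmul (Ccos (x, y)) (Ccos (Cmul (RtoC g) (x, y)))))
             (Cmul (RtoC (1 + g * g)) (Cmul C0 C0)))
      with (Cmul (RtoC (2 * g)) (Cmul (Ccos (x, y)) (Ccos (Cmul (RtoC g) (x, y))))).
    2:{ generalize (Cmul (Ccos (x, y)) (Ccos (Cmul (RtoC g) (x, y)))).
      intros [a1 a2]. unfold Csub, Cadd, Copp, Cmul, RtoC, C0, Re, Im; simpl. f_equal; ring. }
    apply Cmul_ne0. apply RtoC_ne0; auto. apply Cmul_ne0. apply RtoC_ne0; lra.
    apply Cmul_ne0; auto.
Qed.

Lemma mult1_of g x y : 0 < g -> g <> 1 -> Fg g (x,y) = C0 -> Csin (x,y) <> C0 ->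
  Csin (Cmul (RtoC g) (x,y)) <> C0 -> zero_mult (Fg g) (x,y) 1.
Proof.
  intros H1 H2 HF S1 S2. apply zm_iff. split.
  - intros k Hk. destruct k; [|lia]. rewrite D0_eq; auto.
  - rewrite E1. apply Cmul_ne0. apply RtoC_ne0, g2; auto. apply Cmul_ne0; auto.
Qed.

Lemma m3_sin g x y : 0 < g -> g <> 1 -> zero_mult (Fg g) (x,y) 3 ->
  Csin (x,y) = C0 \/ Csin (Cmul (RtoC g) (x,y)) = C0.
Proof.
  intros H1 H2 H. apply zm_iff in H. destruct H as [H _].
  specialize (H 1%nat ltac:(lia)). rewrite E1 in H.
  destruct (Cmul_eq0 _ _ H). exfalso; exact (RtoC_ne0 _ (g2 g H1 H2) H0).
  apply Cmul_eq0; auto.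
Qed.

Lemma bound_list (l : list Cplx) : exists M, forall w, In w l -> Rabs (Re w) <= M.
Proof.
  induction l as [|a l [M HM]]. exists 0. intros w [].
  exists (Rabs (Re a) + Rabs M). intros w [<-|Hw].
  pose proof (Rabs_pos M). lra. specialize (HM w Hw). pose proof (Rle_abs M). pose proof (Rabs_pos (Re a)). lra.
Qed.

Theorem proposition1 (g : R) (hg0 : 0 < g) (hg1 : g <> 1) :
  (forall z : Cplx, z <> C0 -> Fg g z = C0 ->
     zero_mult (Fg g) z 1 \/ zero_mult (Fg g) z 3) /\
  (forall z : Cplx, z <> C0 -> Fg g z = C0 ->
     (zero_mult (Fg g) z 3 <->
      (Csin z = C0 /\ Csin (Cmul (RtoC g) z) = C0))) /\
  (forall z : Cplx, z <> C0 -> zero_mult (Fg g) z 3 -> Im z = 0) /\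
  (~ is_rational g ->
     forall z : Cplx, z <> C0 -> Fg g z = C0 -> zero_mult (Fg g) z 1) /\
  (is_rational g ->
     ~ exists l : list Cplx, forall z : Cplx, zero_mult (Fg g) z 3 -> In z l).
Proof.
  assert (Hg : g <> 0) by lra.
  assert (Key : forall x y, Fg g (x,y) = C0 ->
     zero_mult (Fg g) (x,y) 1 /\ ~ (Csin (x,y) = C0 /\ Csin (Cmul (RtoC g) (x,y)) = C0)
     \/ (Csin (x,y) = C0 /\ Csin (Cmul (RtoC g) (x,y)) = C0)).
  { intros x y HF. pose proof (both g (x,y) Hg HF) as B.
    destruct (classic (Csin (x,y) = C0)) as [S|S].
    - right. split; auto. apply B; auto.
    - left. split. apply mult1_of; auto. intro E. apply S. apply B; auto.
      tauto. }
  split; [|split; [|split; [|split]]].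
  - intros [x y] _ HF. destruct (Key x y HF) as [[H _]|[S1 S2]]. left; auto.
    right. apply mult3_of; auto.
  - intros [x y] _ HF. split.
    + intro H. pose proof (both g (x,y) Hg HF) as B.
      destruct (m3_sin g x y hg0 hg1 H) as [S|S]; split; auto; apply B; auto.
    + intros [S1 S2]. apply mult3_of; auto.
  - intros [x y] _ H. unfold Im; simpl.
    destruct (m3_sin g x y hg0 hg1 H) as [S|S].
    + apply (sin_zero x y S).
    + rewrite CmulR in S. destruct (sin_zero _ _ S) as [E _]. apply Rmult_integral in E. destruct E; lra.
  - intros Hirr [x y] Hz HF. destruct (Key x y HF) as [[H _]|[S1 S2]]; auto.
    exfalso. apply Hirr.
    destruct (sin_zero x y S1) as [-> Sx]. rewrite CmulR in S2. destruct (sin_zero _ _ S2) as [_ Sgx].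
    destruct (sin_eq_0_0 x Sx) as [k Hk]. destruct (sin_eq_0_0 _ Sgx) as [m Hm].
    assert (Hx : x <> 0) by (intro E; apply Hz; rewrite E; reflexivity).
    assert (IZR k <> 0) by (intro E; rewrite E in Hk; lra).
    exists m, k. split; auto. rewrite Hk in Hm. pose proof PI_RGT_0.
    apply (Rmult_eq_reg_r (IZR k * PI)). rewrite Hm. field; lra. nra.
  - intros [p [q [Hq Hgq]]] [l Hl].
    destruct (bound_list l) as [M HM]. destruct (INR_unbounded M) as [n Hn].
    set (x := INR (S n) * IZR q * PI).
    assert (Sx : sin x = 0).
    { apply sin_eq_0_1. exists (Z.of_nat (S n) * q)%Z. unfold x. rewrite mult_IZR, <- INR_IZR_INZ. ring. }
    assert (Sgx : sin (g * x) = 0).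
    { apply sin_eq_0_1. exists (Z.of_nat (S n) * p)%Z. unfold x. rewrite mult_IZR, <- INR_IZR_INZ, Hgq.
      field; auto. }
    assert (S1 : Csin (x, 0) = C0).
    { unfold Csin, C0, Re, Im; simpl. rewrite Sx, sinh_0. f_equal; ring. }
    assert (S2 : Csin (Cmul (RtoC g) (x, 0)) = C0).
    { rewrite CmulR. unfold Csin, C0, Re, Im; simpl. rewrite Rmult_0_r, Sgx, sinh_0. f_equal; ring. }
    specialize (Hl (x,0) (mult3_of g x 0 hg0 hg1 S1 S2)).
    specialize (HM _ Hl). unfold Re in HM; simpl in HM.
    assert (Hq1 : 1 <= Rabs (IZR q)).
    { rewrite <- abs_IZR. apply IZR_le. assert (q <> 0%Z) by (intro E; subst; apply Hq; reflexivity). lia. }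
    pose proof PI_RGT_0. pose proof PI2_1.
    pose proof (pos_INR n).
    unfold x in HM. rewrite S_INR in HM. rewrite !Rabs_mult, (Rabs_right PI), (Rabs_right (INR n + 1)) in HM by lra.
    assert (INR n + 1 <= (INR n + 1) * Rabs (IZR q)) by nra.
    assert ((INR n + 1) * Rabs (IZR q) <= (INR n + 1) * Rabs (IZR q) * PI) by nra.
    lra.
Qed.
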